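(* Let $S:\mathbb{R}^d\to\mathbb{R}$ be real analytic in a neighborhood of the origin, and let $\beta^1,\dots,\beta^k\in\mathbb{N}^d$. There is a constant $C$ such that for all $x$ sufficiently close to the origin with all coordinates nonzero and all $1\le i\le k$, $$|\partial^{\beta^i}S(x)|\le C\sup_{\alpha\in\mathcal{N}(S)}|x^{\alpha-\beta^i}|,$$ where $|x^{\gamma}|=\prod_j|x_j|^{\gamma_j}$.
   Context: $\mathbb{N}=\{0,1,2,\dots\}$, $\partial^\beta=\partial_1^{\beta_1}\cdots\partial_d^{\beta_d}$. Writing $S(x)=\sum_{\alpha}c_\alpha x^\alpha$ near the origin, $\mathcal{N}(S)$ is the convex hull of $\bigcup_{c_\alpha\ne0}(\alpha+[0,\infty)^d)$. *)

(* Defs.v *)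
From HB Require Import structures.
From mathcomp Require Import all_boot all_order all_algebra.
From mathcomp Require Import all_classical all_reals all_analysis.
Set Implicit Arguments. Unset Strict Implicit. Unset Printing Implicit Defensive.
Import Order.TTheory GRing.Theory Num.Theory.
Import numFieldNormedType.Exports.
Local Open Scope classical_set_scope.
Local Open Scope ring_scope.

Definition monom {R : realType} {d : nat} (alpha : 'I_d -> nat) (x : 'rV[R]_d) : R :=
  \prod_(j < d) (x 0 j) ^+ (alpha j).

(* box partial sum of the power series sum_alpha c_alpha x^alpha over alpha_j < N *)
Definition box_sum {R : realType} {d : nat} (c : ('I_d -> nat) -> R)
  (x : 'rV[R]_d) (N : nat) : R :=
  \sum_(a : {ffun 'I_d -> 'I_N}) c (fun j => (a j : nat)) * monom (fun j => (a j : nat)) x.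

Definition box_abs_sum {R : realType} {d : nat} (c : ('I_d -> nat) -> R)
  (x : 'rV[R]_d) (N : nat) : R :=
  \sum_(a : {ffun 'I_d -> 'I_N}) `|c (fun j => (a j : nat)) * monom (fun j => (a j : nat)) x|.

(* S(x) = sum_alpha c_alpha x^alpha (absolutely convergent) for all x in the
   polydisc of radius r around the origin: S is real analytic near 0 with
   Taylor coefficients c. *)
Definition power_series_rep {R : realType} {d : nat} (S : 'rV[R]_d -> R)
  (c : ('I_d -> nat) -> R) (r : R) : Prop :=
  0 < r /\
  forall x : 'rV[R]_d, `|x| < r ->
    (exists M : R, forall N, box_abs_sum c x N <= M) /\
    (box_sum c x @ \oo --> S x).

(* Newton polyhedron: convex hull of the union of alpha + [0,oo)^d, c_alpha <> 0 *)
Definition shifted_orthants {R : realType} {d : nat} (c : ('I_d -> nat) -> R)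
  : set ('I_d -> R) :=
  [set q | exists alpha : 'I_d -> nat, c alpha <> 0 /\ forall j, (alpha j)%:R <= q j].

Definition convex_hull_fun {R : realType} {d : nat} (A : set ('I_d -> R))
  : set ('I_d -> R) :=
  [set p | exists (n : nat) (w : 'I_n -> R) (q : 'I_n -> 'I_d -> R),
     (forall i, 0 <= w i) /\ \sum_(i < n) w i = 1 /\ (forall i, A (q i)) /\
     forall j, p j = \sum_(i < n) w i * q i j].

Definition newton_polyhedron {R : realType} {d : nat} (c : ('I_d -> nat) -> R)
  : set ('I_d -> R) := convex_hull_fun (shifted_orthants c).

Definition abs_monomR {R : realType} {d : nat} (x : 'rV[R]_d) (gamma : 'I_d -> R) : R :=
  \prod_(j < d) (`|x 0 j| `^ gamma j).

Definition unitvec {R : realType} {d : nat} (j : 'I_d) : 'rV[R]_d :=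
  \row_(k < d) (k == j)%:R.

Definition dpartial {R : realType} {d : nat} (j : 'I_d) (f : 'rV[R]_d -> R)
  : 'rV[R]_d -> R := fun x => 'D_(unitvec j) f x.

Definition dmulti {R : realType} {d : nat} (beta : 'I_d -> nat) (f : 'rV[R]_d -> R)
  : 'rV[R]_d -> R :=
  foldr (fun j g => iter (beta j) (dpartial j) g) f (enum 'I_d).

(* Main.v *)
Require Import Defs.
From HB Require Import structures.
From mathcomp Require Import all_boot all_order all_algebra.
From mathcomp Require Import all_classical all_reals all_analysis.
From mathcomp Require Import lra ring zify.
Import Order.TTheory GRing.Theory Num.Theory.
Import numFieldNormedType.Exports.
Local Open Scope classical_set_scope.
Local Open Scope ring_scope.
Set Implicit Arguments. Unset Strict Implicit. Unset Printing Implicit Defensive.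

Section BoxSums.
Variable R : realType.
Variable d : nat.
Notation mi := ('I_d -> nat).
Implicit Types G : mi -> R.

Definition va N (a : {ffun 'I_d -> 'I_N}) : mi := fun j => (a j : nat).

Definition bs (G : mi -> R) N : R := \sum_(a : {ffun 'I_d -> 'I_N}) G (va a).

Lemma reindex_inj_sum (A B : finType) (phi : A -> B) (P : pred B) (F : B -> R) :
  injective phi -> (forall a, P (phi a)) ->
  (forall b, P b -> exists a, phi a = b) ->
  \sum_a F (phi a) = \sum_(b | P b) F b.
Proof.
move=> inj K2 K3.
rewrite -[LHS](big_imset _ (in2W inj)) /=.
apply: eq_bigl => b; apply/imsetP/idP.
  by move=> [a _ ->].
by move=> /K3 [a <-]; exists a.
Qed.

Definition widen_ff N M (NM : (N <= M)%N) (a : {ffun 'I_d -> 'I_N}) : {ffun 'I_d -> 'I_M} :=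
  [ffun j => widen_ord NM (a j)].

Lemma widen_inj N M (NM : (N <= M)%N) : injective (widen_ff NM).
Proof.
move=> a b /ffunP H; apply/ffunP => j.
by apply/val_inj; move/(congr1 val): (H j); rewrite !ffunE.
Qed.

Lemma va_widen N M (NM : (N <= M)%N) a : va (widen_ff NM a) = va a.
Proof. by apply: funext => j; rewrite /va ffunE. Qed.

Lemma bs_sub G N M : (N <= M)%N ->
  bs G N = \sum_(b : {ffun 'I_d -> 'I_M} | [forall j, (b j < N)%N]) G (va b).
Proof.
move=> NM; rewrite /bs.
under eq_bigr => a _ do rewrite -(va_widen NM).
rewrite (@reindex_inj_sum _ _ (widen_ff NM) (fun b : {ffun 'I_d -> 'I_M} => [forall j, (b j < N)%N]) (fun b => G (va b)) (@widen_inj N M NM)) //.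
  by move=> a; apply/forallP => j; rewrite ffunE /=.
move=> b /forallP Pb; exists [ffun j => Ordinal (Pb j)].
by apply/ffunP => j; rewrite !ffunE; apply/val_inj.
Qed.

Lemma bs_le G N M : (forall a, 0 <= G a) -> (N <= M)%N -> bs G N <= bs G M.
Proof.
move=> G0 NM; rewrite (bs_sub G NM) [leRHS]/bs big_mkcond /=.
by apply: ler_sum => b _; case: ifP.
Qed.

Lemma bs_diff G N M : (N <= M)%N ->
  bs G M - bs G N = \sum_(b : {ffun 'I_d -> 'I_M} | ~~ [forall j, (b j < N)%N]) G (va b).
Proof.
move=> NM; rewrite (bs_sub G NM) /bs (bigID (fun b : {ffun 'I_d -> 'I_M} => [forall j, (b j < N)%N])) /=.
by rewrite addrAC subrr add0r.
Qed.

Lemma bs_abs G N : `|bs G N| <= bs (fun a => `|G a|) N.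
Proof. exact: ler_norm_sum. Qed.

Lemma bs_diff_abs G N M : (N <= M)%N ->
  `|bs G M - bs G N| <= bs (fun a => `|G a|) M - bs (fun a => `|G a|) N.
Proof. by move=> NM; rewrite !bs_diff //; apply: ler_norm_sum. Qed.

Lemma bsB G1 G2 N : bs (fun a => G1 a - G2 a) N = bs G1 N - bs G2 N.
Proof. by rewrite /bs -sumrB. Qed.

Lemma bsZ k G N : bs (fun a => k * G a) N = k * bs G N.
Proof. by rewrite /bs mulr_sumr. Qed.

Lemma bs_ler G1 G2 N : (forall a, G1 a <= G2 a) -> bs G1 N <= bs G2 N.
Proof. by move=> H; apply: ler_sum => a _. Qed.

Definition addej (j : 'I_d) (a : mi) : mi := fun i => (a i + (i == j))%N.

Definition shift_ff (j : 'I_d) N (a : {ffun 'I_d -> 'I_N}) : {ffun 'I_d -> 'I_N.+1} :=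
  [ffun i => inord (a i + (i == j))].

Lemma va_shift j N a : va (@shift_ff j N a) = addej j (va a).
Proof.
apply: funext => i; rewrite /va /addej ffunE inordK //.
by rewrite ltnS; case: (i == j); rewrite ?addn1 ?addn0 // ltnW.
Qed.

Lemma shift_inj j N : injective (@shift_ff j N).
Proof.
move=> a b H; apply/ffunP => i; apply/val_inj.
move/(congr1 (fun f => va f i)): H; rewrite !va_shift /addej => /eqP.
by rewrite eqn_add2r => /eqP.
Qed.

Definition Pshift (j : 'I_d) N (b : {ffun 'I_d -> 'I_N.+1}) : bool :=
  [forall i, if i == j then (0 < b i)%N else (b i < N)%N].

Lemma bs_shift j G N :
  \sum_(a : {ffun 'I_d -> 'I_N}) G (addej j (va a)) =
  \sum_(b : {ffun 'I_d -> 'I_N.+1} | Pshift j b) G (va b).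
Proof.
under eq_bigr => a _ do rewrite -va_shift.
rewrite (@reindex_inj_sum _ _ (@shift_ff j N) (@Pshift j N) (fun b => G (va b)) (@shift_inj j N)) //.
  move=> a; apply/forallP => i; rewrite ffunE inordK; last first.
    by rewrite ltnS; case: (i == j); rewrite ?addn1 ?addn0 // ltnW.
  by case: eqP => _; rewrite ?addn1 ?addn0.
move=> b /forallP Pb.
have lt i : (b i - (i == j) < N)%N.
  move: (Pb i); case: eqP => _; last by rewrite subn0.
  by move=> b0; rewrite subn1 -ltnS prednK // ltn_ord.
exists [ffun i => Ordinal (lt i)]; apply/ffunP => i; rewrite !ffunE /=; apply/val_inj => /=.
rewrite inordK; last by rewrite subnK ?ltn_ord //; move: (Pb i); case: eqP.
by rewrite subnK //; move: (Pb i); case: eqP.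
Qed.

Lemma bs_shift_le j G N : (forall a, 0 <= G a) ->
  \sum_(a : {ffun 'I_d -> 'I_N}) G (addej j (va a)) <= bs G N.+1.
Proof.
move=> G0; rewrite bs_shift /bs big_mkcond /=.
by apply: ler_sum => b _; case: ifP.
Qed.

Lemma bs_shift_diff j G N : (forall a, a j = 0%N -> G a = 0) ->
  `|\sum_(a : {ffun 'I_d -> 'I_N}) G (addej j (va a)) - bs G N|
  <= bs (fun a => `|G a|) N.+1 - bs (fun a => `|G a|) N.
Proof.
move=> G0; rewrite bs_shift (bs_sub G (leqnSn N)) bs_diff //.
rewrite [X in _ - X]big_mkcond [X in X - _]big_mkcond [X in _ <= X]big_mkcond -sumrB /=.
apply: le_trans (ler_norm_sum _ _ _) _.
apply: ler_sum => b _.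
case A: [forall j0, (b j0 < N)%N] => /=; last first.
  by case: (Pshift j b); rewrite ?subr0 ?normr_ge0 ?normrE.
case P: (Pshift j b) => /=; rewrite ?subrr ?normr0 //.
rewrite sub0r normrN.
have -> : G (va b) = 0; last by rewrite normr0.
apply: G0; move/forallP: A => A; move/negbT/forallPn: P => [i].
case: eqP => [->|_]; last by rewrite A.
by rewrite /va -eqn0Ngt => /eqP.
Qed.

End BoxSums.

Section Conv.
Variable R : realType.
Variable d : nat.
Notation mi := ('I_d -> nat).
Implicit Types G : mi -> R.

Lemma mono_cvg (u : nat -> R) K : {homo u : n m / (n <= m)%N >-> n <= m} ->
  (forall n, u n <= K) -> u @ \oo --> sup (range u).
Proof.
move=> hu uK; apply: nondecreasing_cvgn => //.
by exists K => _ [n _ <-].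
Qed.

Lemma bs_nonneg_cvg G K : (forall a, 0 <= G a) -> (forall N, bs G N <= K) ->
  exists l : R, bs G @ \oo --> l.
Proof.
move=> G0 GK; exists (sup (range (bs G))); apply: (mono_cvg (K:=K)) => //.
by move=> n m nm; apply: bs_le.
Qed.

Lemma bs_cvg G K : (forall N, bs (fun a => `|G a|) N <= K) ->
  exists l : R, bs G @ \oo --> l.
Proof.
move=> GK.
have P1 a : 0 <= `|G a| + G a by have := ler_norm (- G a); rewrite normrN; lra.
have [l1 h1] := @bs_nonneg_cvg (fun a => `|G a| + G a) (K + K) P1
  (fun N => ltac:(rewrite /bs big_split /=; have := GK N; have := ler_norm_sum (index_enum {ffun 'I_d -> 'I_N}) (fun a => G (va a)) xpredT;
    have := ler_norm (\sum_(a : {ffun 'I_d -> 'I_N}) G (va a)); rewrite /bs; lra)).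
have [l2 h2] := @bs_nonneg_cvg (fun a => `|G a|) K (fun a => normr_ge0 _) GK.
exists (l1 - l2).
have -> : bs G = (fun N => bs (fun a => `|G a| + G a) N - bs (fun a => `|G a|) N).
  by apply: funext => N; rewrite -bsB; congr bs; apply: funext => a; lra.
exact: cvgB.
Qed.

Lemma lim_abs_le (u : nat -> R) l B : u @ \oo --> l -> (forall n, `|u n| <= B) -> `|l| <= B.
Proof.
move=> ul H.
have nl : (fun n => `|u n|) @ \oo --> `|l| by apply: cvg_norm.
rewrite -(cvg_lim _ nl) //; apply: limr_le; first exact: cvgP nl.
by near=> n; apply: H.
Unshelve. all: by end_near.
Qed.

Lemma bs_diff_cvg0 G K : (forall a, 0 <= G a) -> (forall N, bs G N <= K) ->
  (fun N => bs G N.+1 - bs G N) @ \oo --> 0.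
Proof.
move=> G0 GK; have [l hl] := bs_nonneg_cvg G0 GK.
rewrite -(subrr l); apply: cvgB => //.
by rewrite (cvg_shiftS (bs G)).
Qed.
End Conv.

Section Real1.
Variable R : realType.

Lemma L1 (u s : R) n : 0 <= u -> 0 <= s -> n.+1%:R * u ^+ n * s <= (u + s) ^+ n.+1.
Proof.
move=> u0 s0; elim: n => [|n IH]; first by rewrite expr0 expr1; lra.
have h2 : u ^+ n.+1 <= (u + s) ^+ n.+1 by apply: lerXn2r; rewrite ?nnegrE; lra.
rewrite (exprS (u + s)) (exprS u).
set A := (u + s) ^+ n.+1 in IH h2 *; set B := u ^+ n in IH h2 *.
rewrite exprS -/B in h2.
have B0 : 0 <= B by apply: exprn_ge0.
rewrite -[n.+2]addn1 natrD -[n.+1]addn1 natrD in IH *.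
nra.
Qed.

Definition E1 (u h : R) n := (u + h) ^+ n - u ^+ n - n%:R * h * u ^+ n.-1.

Lemma E1S u h n : E1 u h n.+1 = (u + h) * E1 u h n + n%:R * h ^+ 2 * u ^+ n.-1.
Proof.
rewrite /E1; case: n => [|m] /=.
  by rewrite expr0 expr1 mul0r; ring.
rewrite !exprS -[m.+2]addn1 -[m.+1]addn1 !natrD.
ring.
Qed.

Lemma E1_ge0 u s n : 0 <= u -> 0 <= s -> 0 <= E1 u s n.
Proof.
move=> u0 s0; elim: n => [|n IH]; first by rewrite /E1 !expr0 mul0r; lra.
rewrite E1S; apply: addr_ge0; first by apply: mulr_ge0 => //; lra.
by apply: mulr_ge0; [apply: mulr_ge0 => //; apply: exprn_ge0|apply: exprn_ge0].
Qed.

Lemma E1_bound (u h s : R) n : 0 < s -> `|h| <= s ->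
  `|E1 u h n| <= (h / s) ^+ 2 * E1 `|u| s n.
Proof.
move=> s0 hs; elim: n => [|n IH]; first by rewrite /E1 !expr0 !mul0r !subr0 subrr normr0 mulr0.
rewrite !E1S.
apply: le_trans (ler_normD _ _) _.
set q := (h / s) ^+ 2.
have q0 : 0 <= q by rewrite /q exprn_even_ge0.
have F0 : 0 <= E1 `|u| s n by apply: E1_ge0 => //; lra.
have a : `|(u + h) * E1 u h n| <= (`|u| + s) * (q * E1 `|u| s n).
  rewrite normrM; apply: ler_pM => //.
  by apply: le_trans (ler_normD _ _) _; lra.
have b : `|n%:R * h ^+ 2 * u ^+ n.-1| = q * (n%:R * s ^+ 2 * `|u| ^+ n.-1).
  rewrite !normrM normr_nat !normrX.
  have -> : `|h| * `|h| = h ^+ 2 by rewrite -normrM -expr2 ger0_norm // sqr_ge0.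
  rewrite /q expr_div_n.
  by field; rewrite gt_eqF.
rewrite b; lra.
Qed.

Lemma E1_le (u s : R) n : 0 <= u -> 0 <= s -> E1 u s n <= (u + s) ^+ n.
Proof.
move=> u0 s0; rewrite /E1.
have : 0 <= u ^+ n by apply: exprn_ge0.
have : 0 <= n%:R * s * u ^+ n.-1 by apply: mulr_ge0; [apply: mulr_ge0|apply: exprn_ge0].
lra.
Qed.

Lemma E1_bound2 (u h s : R) n : 0 < s -> `|h| <= s ->
  `|E1 u h n| <= (h / s) ^+ 2 * (`|u| + s) ^+ n.
Proof.
move=> s0 hs; apply: le_trans (E1_bound u n s0 hs) _.
by apply: ler_wpM2l; [rewrite exprn_even_ge0|apply: E1_le => //; lra].
Qed.

End Real1.

Section Mono.
Variable R : realType.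
Variable d : nat.
Notation mi := ('I_d -> nat).
Implicit Types (G : mi -> R) (j : 'I_d) (a b : mi) (x y : 'rV[R]_d).

Lemma norm_coord (x : 'rV[R]_d) i : `|x 0 i| <= `|x|.
Proof.
change (`|x 0 i| <= mx_norm x); rewrite mx_normrE.
exact: (le_bigmax _ (fun ij : 'I_1 * 'I_d => `|x ij.1 ij.2|) (0, i)).
Qed.

Lemma norm_lt (x : 'rV[R]_d) r : 0 < r -> (forall i, `|x 0 i| < r) -> `|x| < r.
Proof.
move=> r0 H; change (mx_norm x < r); rewrite mx_normrE.
apply/bigmax_ltP; split => // -[a b] _ /=.
by rewrite (ord1 a); apply: H.
Qed.

Definition Pj (j : 'I_d) (a : mi) (x : 'rV[R]_d) := \prod_(i | i != j) x 0 i ^+ a i.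

Lemma monom_split j a x : monom a x = x 0 j ^+ a j * Pj j a x.
Proof. by rewrite /monom (bigD1 j). Qed.

Lemma Pj_addej j a x : Pj j (addej j a) x = Pj j a x.
Proof.
by apply: eq_bigr => i /negbTE ij; rewrite /addej ij addn0.
Qed.

Lemma addej_j j a : addej j a j = (a j).+1.
Proof. by rewrite /addej eqxx addn1. Qed.

Lemma normr_Pj j a x : `|Pj j a x| = \prod_(i | i != j) `|x 0 i| ^+ a i.
Proof. by rewrite /Pj normr_prod; apply: eq_bigr => i _; rewrite normrX. Qed.

Lemma Pj_ge0 j a x : (forall i, 0 <= x 0 i) -> 0 <= Pj j a x.
Proof. by move=> H; apply: prodr_ge0 => i _; apply: exprn_ge0. Qed.

Lemma Pj_eq j a x y : (forall i, i != j -> x 0 i = y 0 i) -> Pj j a x = Pj j a y.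
Proof. by move=> H; apply: eq_bigr => i ij; rewrite H. Qed.

Definition zpt (x : 'rV[R]_d) j s : 'rV[R]_d :=
  \row_i (if i == j then `|x 0 i| + s else `|x 0 i|).

Lemma monom_zpt x j s b :
  monom b (zpt x j s) = (`|x 0 j| + s) ^+ b j * \prod_(i | i != j) `|x 0 i| ^+ b i.
Proof.
rewrite (monom_split j) /zpt mxE eqxx; congr (_ * _).
by apply: eq_bigr => i /negbTE ij; rewrite mxE ij.
Qed.

Lemma monom_zpt_ge0 x j s b : 0 <= s -> 0 <= monom b (zpt x j s).
Proof.
move=> s0; rewrite monom_zpt; apply: mulr_ge0; first by apply: exprn_ge0; apply: addr_ge0.
by apply: prodr_ge0 => i _; apply: exprn_ge0.
Qed.

Definition dc (j : 'I_d) (c : mi -> R) : mi -> R :=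
  fun a => (a j).+1%:R * c (addej j a).

Lemma box_sumE (c : mi -> R) x N : box_sum c x N = bs (fun a => c a * monom a x) N.
Proof. by []. Qed.

Lemma box_abs_sumE (c : mi -> R) x N : box_abs_sum c x N = bs (fun a => `|c a * monom a x|) N.
Proof. by []. Qed.

End Mono.

Section Deriv.
Variable R : realType.
Variable d : nat.
Notation mi := ('I_d -> nat).
Implicit Types (G : mi -> R) (j : 'I_d) (a b : mi) (x y : 'rV[R]_d).

Lemma deriv_rep (f : 'rV[R]_d -> R) (c : mi -> R) r r' j :
  power_series_rep f c r -> 0 < r' -> r' < r ->
  power_series_rep (dpartial j f) (dc j c) r'.
Proof.
move=> [r0 Hf] r'0 r'r; split => // x xr'.
pose s := (r - r') / 2.
have s0 : 0 < s by rewrite /s; lra.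
pose z := zpt x j s.
have zr : `|z| < r.
  apply: norm_lt => // i; rewrite /z /zpt mxE; have := norm_coord x i.
  have := normr_ge0 (x 0 i).
  by case: eqP => _ h1 h2; rewrite ger0_norm; rewrite /s; lra.
have [[Mz HMz] _] := Hf z zr.
pose H b := `|c b * monom b z|.
have H0 b : 0 <= H b by apply: normr_ge0.
have bsH N : bs H N <= Mz by apply: HMz.
have Mz0 : 0 <= Mz by apply: le_trans (bsH 0%N); apply: sumr_ge0.
pose G b := (b j)%:R * c b * x 0 j ^+ (b j).-1 * Pj j b x.
have Gb b : `|G b| <= s^-1 * H b.
  have -> : H b = `|c b| * monom b z.
    by rewrite /H normrM (ger0_norm (monom_zpt_ge0 _ _ _ (ltW s0))).
  rewrite /G !normrM normr_nat normrX normr_Pj /z monom_zpt.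
  set P := \prod_(i | i != j) `|x 0 i| ^+ b i.
  have P0 : 0 <= P by apply: prodr_ge0 => i _; apply: exprn_ge0.
  set u := `|x 0 j|.
  have u0 : 0 <= u by apply: normr_ge0.
  case E: (b j) => [|n].
    by rewrite !mul0r; apply: mulr_ge0; [rewrite invr_ge0; lra|apply: mulr_ge0 => //; apply: mulr_ge0 => //; apply: exprn_ge0; lra].
  have K : n.+1%:R * u ^+ n <= s^-1 * (u + s) ^+ n.+1.
    by rewrite ler_pdivlMl // mulrC; apply: L1 => //; lra.
  have -> : n.+1%:R * `|c b| * u ^+ n.+1.-1 * P = (`|c b| * P) * (n.+1%:R * u ^+ n) by rewrite /=; ring.
  have -> : s^-1 * (`|c b| * ((u + s) ^+ n.+1 * P)) = (`|c b| * P) * (s^-1 * (u + s) ^+ n.+1) by ring.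
  by apply: ler_wpM2l => //; apply: mulr_ge0.
have hGs N : bs (fun b => `|G b|) N <= s^-1 * Mz.
  apply: le_trans (bs_ler N Gb) _; rewrite bsZ; apply: ler_wpM2l => //.
  by rewrite invr_ge0; lra.
have dcterm a : dc j c a * monom a x = G (addej j a).
  by rewrite /dc /G addej_j Pj_addej (monom_split j) /=; ring.
have absdc N : box_abs_sum (dc j c) x N <= s^-1 * Mz.
  rewrite box_abs_sumE /bs.
  under eq_bigr do rewrite dcterm.
  apply: (@le_trans _ _ (\sum_(a : {ffun 'I_d -> 'I_N}) s^-1 * H (addej j (va a)))).
    by apply: ler_sum => a _; apply: Gb.
  rewrite -mulr_sumr; apply: ler_wpM2l; first by rewrite invr_ge0; lra.
  exact: le_trans (bs_shift_le j N H0) (bsH N.+1).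
have [L HL] := @bs_cvg R d (fun a => dc j c a * monom a x) (s^-1 * Mz) absdc.
have QL : bs G @ \oo --> L.
  pose v N := bs (fun b => `|G b|) N.+1 - bs (fun b => `|G b|) N.
  have Dv : v @ \oo --> 0 := bs_diff_cvg0 (fun b => normr_ge0 _) hGs.
  have bnd N : `|bs (fun a => dc j c a * monom a x) N - bs G N| <= v N.
    have -> : bs (fun a => dc j c a * monom a x) N = \sum_(a : {ffun 'I_d -> 'I_N}) G (addej j (va a)).
      by apply: eq_bigr => a _; rewrite dcterm.
    by apply: bs_shift_diff => b bj; rewrite /G bj !mul0r.
  have D : (fun N => bs (fun a => dc j c a * monom a x) N - bs G N) @ \oo --> 0.
    apply: (@squeeze_cvgr _ _ _ _ (fun N => - v N) v).
    - by near=> N; have := bnd N; rewrite ler_norml.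
    - by rewrite -oppr0; apply: cvgN.
    - exact: Dv.
  have -> : bs G = (fun N => bs (fun a => dc j c a * monom a x) N - (bs (fun a => dc j c a * monom a x) N - bs G N)).
    by apply: funext => N; rewrite opprB addrC subrK.
  by rewrite -[L]subr0; apply: cvgB.
have key h : 0 < `|h| -> `|h| < s ->
    `|(f (h *: unitvec j + x) - f x) - h * L| <= (h / s) ^+ 2 * Mz.
  move=> hpos hs.
  pose y := h *: unitvec j + x.
  have yc i : y 0 i = (if i == j then x 0 i + h else x 0 i).
    by rewrite /y /unitvec !mxE; case: eqP => _; rewrite ?mulr1 ?mulr0; lra.
  have yr : `|y| < r.
    apply: norm_lt => // i; rewrite yc; have := norm_coord x i.
    case: eqP => _ hx; last by lra.
    by apply: le_lt_trans (ler_normD _ _) _; rewrite /s in hs; lra.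
  have [_ Hy] := Hf y yr.
  have [_ Hx] := Hf x (lt_trans xr' r'r).
  pose E b := c b * Pj j b x * E1 (x 0 j) h (b j).
  have eqE : (fun N => box_sum c y N - box_sum c x N - h * bs G N) = bs E.
    apply: funext => N; rewrite !box_sumE -bsZ -!bsB; congr bs; apply: funext => b.
    rewrite /E /E1 /G (monom_split j b y) (monom_split j b x) yc eqxx.
    rewrite (@Pj_eq _ _ j b y x); last by move=> i /negbTE ij; rewrite yc ij.
    ring.
  have cv : bs E @ \oo --> f y - f x - h * L.
    rewrite -eqE; apply: cvgB; first exact: cvgB.
    exact: cvgMr.
  apply: lim_abs_le cv _ => N; apply: le_trans (bs_abs _ _) _.
  apply: le_trans (bs_ler N (G2 := fun b => (h / s) ^+ 2 * H b) _) _.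
    move=> b; rewrite /E /H !normrM normr_Pj (ger0_norm (monom_zpt_ge0 _ _ _ (ltW s0))) /z monom_zpt.
    have := E1_bound2 (x 0 j) (b j) s0 (ltW hs).
    set P := \prod_(i | i != j) `|x 0 i| ^+ b i.
    have P0 : 0 <= P by apply: prodr_ge0 => i _; apply: exprn_ge0.
    move=> hE.
    have -> : (h / s) ^+ 2 * (`|c b| * ((`|x 0 j| + s) ^+ b j * P)) = (`|c b| * P) * ((h / s) ^+ 2 * (`|x 0 j| + s) ^+ b j) by ring.
    by apply: ler_wpM2l => //; apply: mulr_ge0.
  by rewrite bsZ; apply: ler_wpM2l; [rewrite exprn_even_ge0|apply: bsH].
have DL : 'D_(unitvec j) f x = L.
  apply: cvg_lim => //.
  apply/cvgrPdist_lt => eps eps0.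
  pose del := Num.min s (eps * s ^+ 2 / (Mz + 1)).
  have del0 : 0 < del.
    rewrite /del lt_min s0 /=; apply: divr_gt0; last by lra.
    by apply: mulr_gt0 => //; apply: exprn_gt0.
  near=> h.
  have h0 : h != 0 by near: h; exact: nbhs_dnbhs_neq.
  have hd : `|h| < del by near: h; apply: dnbhs0_lt.
  have hs : `|h| < s by apply: lt_le_trans hd _; rewrite /del ge_min lexx.
  have he : `|h| < eps * s ^+ 2 / (Mz + 1) by apply: lt_le_trans hd _; rewrite /del ge_min lexx orbT.
  have hpos : 0 < `|h| by rewrite normr_gt0.
  have := key h hpos hs.
  rewrite /= /shift.
  set D := f (h *: unitvec j + x) - f x.
  move=> kb.
  have -> : L - h^-1 *: D = - (h^-1 * (D - h * L)).
    rewrite /GRing.scale /=; by field.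
  rewrite normrN normrM normrV ?unitfE //.
  have S20 : 0 < s ^+ 2 by apply: exprn_gt0.
  have e1 : (h / s) ^+ 2 * Mz = `|h| * (`|h| * Mz / s ^+ 2).
    rewrite expr_div_n -real_normK ?num_real //; field; by rewrite gt_eqF.
  rewrite e1 in kb.
  have k2 : `|h|^-1 * `|D - h * L| <= `|h| * Mz / s ^+ 2.
    by rewrite ler_pdivrMl // mulrA.
  apply: le_lt_trans k2 _.
  have he2 : `|h| * (Mz + 1) < eps * s ^+ 2 by rewrite -ltr_pdivlMr //; lra.
  rewrite ltr_pdivrMr //.
  have : 0 <= `|h| by apply: normr_ge0.
  nra.
split; first by exists (s^-1 * Mz).
by rewrite /dpartial DL.
Unshelve. all: by end_near.
Qed.
End Deriv.

Section Iter.
Variable R : realType.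
Variable d : nat.
Notation mi := ('I_d -> nat).
Variable c : mi -> R.

Definition addmi (a g : mi) : mi := fun i => (a i + g i)%N.

Definition Qinv (g : 'rV[R]_d -> R) (gam : mi) : Prop :=
  exists (c' : mi -> R) (r' : R), power_series_rep g c' r' /\
    forall a, c' a <> 0 -> c (addmi a gam) <> 0.

Lemma Qinv_dpartial g gam j : Qinv g gam ->
  Qinv (dpartial j g) (fun i => (gam i + (i == j))%N).
Proof.
move=> [c' [r' [Hr Hc]]]; exists (dc j c'), (r' / 2); split.
  have r0 : 0 < r' by case: Hr.
  by apply: deriv_rep Hr _ _; lra.
move=> a; rewrite /dc => /eqP; rewrite mulf_eq0 negb_or => /andP[_ /eqP /Hc].
congr (c _ <> 0); apply: funext => i; rewrite /addmi /addej.
by rewrite -addnA [((i == j) + _)%N]addnC.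
Qed.

Lemma Qinv_iter g gam j n : Qinv g gam ->
  Qinv (iter n (dpartial j) g) (fun i => (gam i + n * (i == j))%N).
Proof.
elim: n => [|n IH] /= H.
  by move: H; congr (Qinv g _); apply: funext => i; rewrite mul0n addn0.
move: (Qinv_dpartial j (IH H)); congr (Qinv _ _); apply: funext => i.
by rewrite mulSn; lia.
Qed.

Lemma Qinv_dmulti (S : 'rV[R]_d -> R) (beta : mi) r :
  power_series_rep S c r -> Qinv (dmulti beta S) beta.
Proof.
move=> HS.
have H0 : Qinv S (fun _ => 0%N).
  exists c, r; split => // a; congr (c _ <> 0); apply: funext => i; by rewrite /addmi addn0.
have gen (s : seq 'I_d) : Qinv (foldr (fun j g => iter (beta j) (dpartial j) g) S s)
    (fun i => \sum_(j <- s) (beta j * (i == j)))%N.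
  elim: s => [|j s IH] /=.
    by move: H0; congr (Qinv _ _); apply: funext => i; rewrite big_nil.
  move: (Qinv_iter j (beta j) IH); congr (Qinv _ _); apply: funext => i.
  by rewrite big_cons addnC mulnC.
move: (gen (enum 'I_d)); congr (Qinv _ _); apply: funext => i.
rewrite big_enum /= (bigD1 i) //= eqxx muln1 big1 ?addn0 //.
by move=> j /negbTE ji; rewrite eq_sym ji muln0.
Qed.
End Iter.

Section Dickson.
Variable d : nat.
Notation mi := ('I_d -> nat).

Definition basis (A : set mi) (T : finType) (L : T -> mi) :=
  (forall t, A (L t)) /\ (forall a, A a -> exists t, forall i, (L t i <= a i)%N).

Definition has_basis (A : set mi) := exists (T : finType) (L : T -> mi), basis A L.

Lemma empty_basis (A : set mi) : (forall a, ~ A a) -> has_basis A.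
Proof.
move=> H; exists void, (fun t : void => match t with end); split => [[]|a /H //].
Qed.

Lemma claim n : forall (F : {set 'I_d}) (A : set mi) (v : mi), #|F| = n ->
  (forall a, A a -> forall i, i \notin F -> a i = v i) -> has_basis A.
Proof.
elim: n => [|n IH] F A v cF HA.
  have Av a : A a -> a = v.
    by move=> Aa; apply: funext => i; apply: HA => //; rewrite (cards0_eq cF) inE.
  have [Avv|nAv] := pselect (A v).
    exists unit, (fun _ => v); split => // a /Av ->; by exists tt.
  by apply: empty_basis => a Aa; apply: nAv; rewrite -(Av a Aa).
have [[a0 Aa0]|nA] := pselect (exists a, A a); last first.
  by apply: empty_basis => a Aa; apply: nA; exists a.
pose K := {j : 'I_d & 'I_(a0 j)}.
pose Ak (k : K) : set mi := fun a => A a /\ projT1 k \in F /\ a (projT1 k) = projT2 k.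
have Hk k : exists y : {T : finType & T -> mi}, basis (Ak k) (projT2 y).
  case: k => j t.
  have [jF|njF] := boolP (j \in F); last first.
    have [T [L HL]] := @empty_basis (Ak (existT _ j t)) (fun a (H : Ak (existT _ j t) a) => (negP njF) (proj1 (proj2 H))).
    by exists (existT _ T L).
  have [T [L HL]] : has_basis (Ak (existT _ j t)).
    apply: (IH (F :\ j) _ (fun i => if i == j then (t : nat) else v i)).
      by move: cF; rewrite (cardsD1 j F) jF add1n => -[].
    move=> a [Aa [_ /= aj]] i; rewrite !inE negb_and negbK.
    case: eqP => [->|ij] //= iF; exact: HA.
  by exists (existT _ T L).
have [f Hf] := choice Hk.
exists (option {k : K & projT1 (f k)}).
exists (fun t => match t with Some (existT k u) => projT2 (f k) u | None => a0 end).
split.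
  case => [[k u]|] //=.
  by have [H1 _] := Hf k; case: (H1 u).
move=> a Aa.
have [ge|] := boolP [forall i, (a0 i <= a i)%N].
  by exists None => i; move/forallP: ge.
move/forallPn => [i]; rewrite -ltnNge => lt.
have iF : i \in F.
  apply/negPn/negP => niF.
  by move: lt; rewrite (HA a Aa i niF) (HA a0 Aa0 i niF) ltnn.
pose k : K := existT _ i (Ordinal lt).
have [_ H2] := Hf k.
have [u Hu] := H2 a (conj Aa (conj iF erefl)).
by exists (Some (existT _ k u)).
Qed.

Lemma dickson (A : set mi) : has_basis A.
Proof.
apply: (@claim #|[set: 'I_d]%SET| [set: 'I_d]%SET A (fun _ => 0%N)) => // a _ i.
by rewrite inE.
Qed.

End Dickson.

Section Coord.
Variable R : realType.

Lemma coord_bound (u rho : R) (A B Lj : nat) : 0 < u -> u <= rho -> (Lj <= A + B)%N ->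
  u ^+ A <= rho ^+ A * (rho `^ (B%:R - Lj%:R) * u `^ (Lj%:R - B%:R)).
Proof.
move=> u0 urho LAB.
have rho0 : 0 < rho by apply: lt_le_trans urho.
rewrite -!powR_mulrn; try lra.
have e : A%:R = (Lj%:R - B%:R) + (A + B - Lj)%N%:R :> R.
  by rewrite natrB // natrD; ring.
rewrite {1}e powRD; last by apply/implyP => _; rewrite gt_eqF.
have e2 : rho `^ A%:R * rho `^ (B%:R - Lj%:R) = rho `^ (A + B - Lj)%N%:R.
  rewrite -powRD; last by apply/implyP => _; rewrite gt_eqF.
  by congr (_ `^ _); rewrite natrB // natrD; ring.
rewrite mulrA e2 mulrC; apply: ler_wpM2r; first exact: powR_ge0.
by apply: ge0_ler_powR => //; rewrite ?nnegrE; lra.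
Qed.
End Coord.

Section Final.
Variable R : realType.
Variable d : nat.
Notation mi := ('I_d -> nat).

Lemma monom_bound (x : 'rV[R]_d) (rho : R) (a bet Lt : mi) :
  (forall j, x 0 j != 0) -> (forall j, `|x 0 j| <= rho) ->
  (forall j, (Lt j <= a j + bet j)%N) ->
  `|monom a x| <= monom a (const_mx rho : 'rV[R]_d) *
     (\prod_j rho `^ ((bet j)%:R - (Lt j)%:R) *
      abs_monomR x (fun j => (Lt j)%:R - (bet j)%:R)).
Proof.
move=> xnz xr LH.
rewrite /monom /abs_monomR normr_prod -!big_split /=.
apply: ler_prod => j _; rewrite normrX exprn_ge0 ?normr_ge0 //= mxE.
by apply: coord_bound; rewrite ?normr_gt0.
Qed.
End Final.


Unset Implicit Arguments.
Theorem corollary2p3 (R : realType) (d k : nat) (S : 'rV[R]_d -> R)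
  (c : ('I_d -> nat) -> R) (r : R) (beta : 'I_k -> ('I_d -> nat)) :
  power_series_rep S c r ->
  exists C : R, exists delta : R, 0 < delta /\
    forall x : 'rV[R]_d, `|x| < delta -> (forall j, x 0 j != 0) ->
    forall i : 'I_k,
      ((`| dmulti (beta i) S x |)%:E <=
        C%:E * ereal_sup [set (abs_monomR x (fun j => alpha j - ((beta i j)%:R)))%:E
                          | alpha in newton_polyhedron c])%E.
Proof.
move=> HS.
have HQ' i : exists p : (('I_d -> nat) -> R) * R,
    power_series_rep (dmulti (beta i) S) p.1 p.2 /\
    (forall a, p.1 a <> 0 -> c (addmi a (beta i)) <> 0).
  by have [c' [r' H]] := Qinv_dmulti (beta i) HS; exists (c', r').
have [p Hp] := choice HQ'.
have rpos i : 0 < (p i).2 by have [[]] := Hp i.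
pose rho := \big[Num.min/1]_i ((p i).2 / 2).
have rho0 : 0 < rho.
  apply: (big_ind (fun v => 0 < v)) => //; first by move=> u v u0 v0; rewrite lt_min u0 v0.
  by move=> i _; have := rpos i; lra.
have rhoi i : rho <= (p i).2 / 2 by apply: bigmin_le.
pose rho1 : 'rV[R]_d := const_mx rho.
have rho1r i : `|rho1| < (p i).2.
  apply: norm_lt => // j; rewrite mxE ger0_norm; last lra.
  by have := rhoi i; have := rpos i; lra.
have HM i : exists M, forall N, box_abs_sum (p i).1 rho1 N <= M.
  by have [[_ Hr] _] := Hp i; have [] := Hr rho1 (rho1r i).
have [Mf HMf] := choice HM.
have Mf0 i : 0 <= Mf i.
  by apply: le_trans (HMf i 0%N); apply: sumr_ge0 => a _; apply: normr_ge0.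
have xri (x : 'rV[R]_d) i : `|x| < rho -> `|x| < (p i).2.
  by move=> xr; apply: lt_le_trans xr _; have := rhoi i; have := rpos i; lra.
have [Hz|Hnz] := pselect (forall a, c a = 0).
  exists 0, rho; split => // x xr xnz i.
  rewrite mul0e lee_fin.
  have [[_ Hr] Hsupp] := Hp i.
  have [_ cv] := Hr x (xri x i xr).
  apply: (lim_abs_le cv) => N.
  rewrite box_sumE /bs big1 ?normr0 // => a _.
  have -> : (p i).1 (va a) = 0; last by rewrite mul0r.
  by apply: contrapT => /Hsupp; rewrite Hz.
have [a0 ca0] : exists a0, c a0 <> 0.
  apply: contrapT => H; apply: Hnz => a; apply: contrapT => ca; apply: H; by exists a.
have [T [L [HL1 HL2]]] := dickson [set a | c a <> 0].
have [t0 _] := HL2 a0 ca0.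
pose K i t := \prod_j rho `^ ((beta i j)%:R - (L t j)%:R).
have K0 i t : 0 <= K i t by apply: prodr_ge0 => j _; apply: powR_ge0.
pose Kt i := \sum_t K i t.
have Kt0 i : 0 <= Kt i by apply: sumr_ge0.
have KKt i t : K i t <= Kt i.
  by rewrite /Kt (bigD1 t) //= lerDl; apply: sumr_ge0.
pose C := 1 + \sum_i Kt i * Mf i.
have C0 : 0 < C.
  have : 0 <= \sum_i Kt i * Mf i by apply: sumr_ge0 => i _; apply: mulr_ge0.
  by rewrite /C; lra.
exists C, rho; split => // x xr xnz i.
set s := ereal_sup _.
pose w t := abs_monomR x (fun j => (L t j)%:R - (beta i j)%:R).
have w0 t : 0 <= w t by apply: prodr_ge0 => j _; apply: powR_ge0.
have ws t : ((w t)%:E <= s)%E.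
  apply: ereal_sup_ubound; exists (fun j => (L t j)%:R) => //.
  exists 1%N, (fun _ => 1), (fun _ => fun j => (L t j)%:R).
  split => //; split; first by rewrite big_ord1.
  split; first by move=> _; exists (L t); split => //; exact: HL1.
  by move=> j; rewrite big_ord1 mul1r.
have xc j : `|x 0 j| <= rho by apply: ltW; apply: le_lt_trans (norm_coord x j) xr.
case Es: s => [s'| |]; last first.
- by have := ws t0; rewrite Es.
- by rewrite gt0_muley ?lte_fin // leey.
have s'0 : 0 <= s' by have := ws t0; rewrite Es lee_fin => /(le_trans (w0 t0)).
rewrite -EFinM lee_fin.
have [[_ Hr] Hsupp] := Hp i.
have [_ cv] := Hr x (xri x i xr).
have bnd : `|dmulti (beta i) S x| <= Kt i * s' * Mf i.
  apply: (lim_abs_le cv) => N.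
  apply: le_trans (ler_norm_sum _ _ _) _.
  apply: (@le_trans _ _ (Kt i * s' * box_abs_sum (p i).1 rho1 N)); last first.
    by apply: ler_wpM2l; [apply: mulr_ge0|apply: HMf].
  rewrite /box_abs_sum mulr_sumr; apply: ler_sum => a _.
  rewrite !normrM.
  have [->|nz] := eqVneq ((p i).1 (va a)) 0.
    by rewrite normr0 !mul0r mulr0.
  have [t Ht] := HL2 _ (Hsupp _ (elimN eqP nz)).
  rewrite (ger0_norm (_ : 0 <= monom _ rho1)); last first.
    by apply: prodr_ge0 => j _; rewrite mxE; apply: exprn_ge0; lra.
  rewrite mulrCA; apply: ler_wpM2l; first exact: normr_ge0.
  apply: le_trans (monom_bound (a := va a) (bet := beta i) (Lt := L t) xnz xc (fun j => Ht j)) _.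
  rewrite mulrC; apply: ler_wpM2r.
    by apply: prodr_ge0 => j _; rewrite mxE; apply: exprn_ge0; lra.
  apply: ler_pM; [exact: K0|exact: w0|exact: KKt|].

  by have := ws t; rewrite Es lee_fin.
apply: le_trans bnd _.
rewrite -mulrA [s' * _]mulrC mulrA; apply: ler_wpM2r => //.
rewrite /C; apply: le_trans (_ : \sum_i0 Kt i0 * Mf i0 <= _); last by rewrite lerDr.
by rewrite (bigD1 i) //= lerDl; apply: sumr_ge0 => j _; apply: mulr_ge0.
Qed.
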